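(* Let $\delta$ be a classifier and $t\ge 0$. If $\delta$ is not null, then for each $\beta\in\{0,1\}$ the conditional payoff $V_\beta(r)$ is strictly quasiconcave in $r\in\mathbb{R}$ and attains its maximum at some (finite) $r\in\mathbb{R}$. If $\delta$ is null, every individual is indifferent among all reward levels $r$.
   Context: Individuals have privately known costs $\gamma_i\in\mathbb{R}$ of choosing $\beta_i=1$ (compliance) rather than $\beta_i=0$, distributed according to a continuously differentiable CDF $F$ with log-concave density $f$ of full support on $\mathbb{R}$. A classifier $\delta=(\delta_1,\delta_0)\in[0,1]^2$ assigns $d_i\in\{0,1\}$ with $\Pr[d_i=s_i\mid s_i]=\delta_{s_i}$, where the signal satisfies $\Pr[s_i=\beta_i]=\phi\in(\tfrac12,1]$. Let $\rho=\rho(\delta,\phi)=(\delta_1+\delta_0-1)(2\phi-1)$; $\delta$ is null if $\rho=0$. Individuals with $d_i=1$ receive reward $r$, rewards are financed by an equal tax on everyone (budget balance), and each individual additionally gets $t\cdot\pi$ where $\pi$ is the population compliance rate; individuals comply iff $\gamma_i\le r\rho$, so $\pi=F(r\rho)$. Individual $i$'s expected payoff from reward $r$, conditional on complying, is $V_1(r)=-\gamma_i+r\rho(1-F(r\rho))+tF(r\rho)$, and conditional on not complying is $V_0(r)=-r\rho F(r\rho)+tF(r\rho)$; an individual's payoff from $r$ is $V_1(r)$ if $\gamma_i\le r\rho$ and $V_0(r)$ otherwise. *)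

(* Defs.v *)
From Stdlib Require Import Reals.
From Coquelicot Require Import Coquelicot.
Open Scope R_scope.

Definition is_C1_cdf_with_density (F f : R -> R) : Prop :=
  (forall x, is_derive F x (f x)) /\
  (forall x, continuous f x) /\
  is_lim F m_infty 0 /\
  is_lim F p_infty 1.

Definition full_support (f : R -> R) : Prop := forall x, 0 < f x.

(* log-concavity: ln o f is concave (f is positive under full support) *)
Definition log_concave (f : R -> R) : Prop :=
  forall x y l, 0 <= l <= 1 ->
    l * ln (f x) + (1 - l) * ln (f y) <= ln (f (l * x + (1 - l) * y)).

Definition rho (d1 d0 phi : R) : R := (d1 + d0 - 1) * (2 * phi - 1).

Definition is_null (d1 d0 phi : R) : Prop := rho d1 d0 phi = 0.

Definition V1 (F : R -> R) (rh t gamma : R) (r : R) : R :=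
  - gamma + r * rh * (1 - F (r * rh)) + t * F (r * rh).

Definition V0 (F : R -> R) (rh t : R) (r : R) : R :=
  - (r * rh * F (r * rh)) + t * F (r * rh).

Definition Vbeta (F : R -> R) (rh t gamma : R) (beta : bool) (r : R) : R :=
  if beta then V1 F rh t gamma r else V0 F rh t r.

(* the individual's actual payoff: complies iff gamma <= r rho *)
Definition payoff (F : R -> R) (rh t gamma : R) (r : R) : R :=
  if Rle_dec gamma (r * rh) then V1 F rh t gamma r else V0 F rh t r.

Definition strictly_quasiconcave (g : R -> R) : Prop :=
  forall x y l, x <> y -> 0 < l < 1 ->
    Rmin (g x) (g y) < g (l * x + (1 - l) * y).

Definition attains_max (g : R -> R) : Prop :=
  exists r, forall r', g r' <= g r.

(* Main.v *)
Require Import Defs.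
From Stdlib Require Import Reals Lra Psatz.
From Coquelicot Require Import Coquelicot.
Open Scope R_scope.

Lemma lim_m (F : R -> R) : is_lim F m_infty 0 ->
  forall eps, 0 < eps -> exists M, forall z, z < M -> Rabs (F z) < eps.
Proof.
  intros H eps He.
  destruct (H (fun y => Rabs (y - 0) < eps)) as [M HM].
  - exists (mkposreal eps He). intros y Hy. exact Hy.
  - exists M. intros z Hz. specialize (HM z Hz). simpl in HM.
    rewrite Rminus_0_r in HM. exact HM.
Qed.

Lemma lim_p (F : R -> R) : is_lim F p_infty 1 ->
  forall eps, 0 < eps -> exists M, forall z, M < z -> Rabs (1 - F z) < eps.
Proof.
  intros H eps He.
  destruct (H (fun y => Rabs (y - 1) < eps)) as [M HM].
  - exists (mkposreal eps He). intros y Hy. exact Hy.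
  - exists M. intros z Hz. specialize (HM z Hz). simpl in HM.
    rewrite <- Rabs_Ropp. replace (- (1 - F z)) with (F z - 1) by ring. exact HM.
Qed.

Lemma mono_left (g g' : R -> R) (x : R) :
  (forall z, derivable_pt_lim g z (g' z)) ->
  (forall z, z <= x -> 0 <= g' z) ->
  (forall eps, 0 < eps -> exists M, forall z, z < M -> Rabs (g z) < eps) ->
  0 <= g x.
Proof.
  intros Hd Hp Hl.
  destruct (Rle_or_lt 0 (g x)) as [H|H]; [exact H|exfalso].
  destruct (Hl (- g x)) as [M HM]; [lra|].
  set (z := Rmin M x - 1).
  assert (Hz : z < M /\ z < x) by (unfold z; split; [pose proof (Rmin_l M x)|pose proof (Rmin_r M x)]; lra).
  destruct (MVT_cor2 g g' z x) as [c [Hc1 Hc2]]; [lra| intros; apply Hd|].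
  assert (0 <= g' c) by (apply Hp; lra).
  specialize (HM z (proj1 Hz)).
  assert (g z <= g x) by nra.
  pose proof (Rle_abs (- g z)). rewrite Rabs_Ropp in H2. lra.
Qed.

Lemma mono_right (g g' : R -> R) (x : R) :
  (forall z, derivable_pt_lim g z (g' z)) ->
  (forall z, x <= z -> g' z <= 0) ->
  (forall eps, 0 < eps -> exists M, forall z, M < z -> Rabs (g z) < eps) ->
  0 <= g x.
Proof.
  intros Hd Hp Hl.
  destruct (Rle_or_lt 0 (g x)) as [H|H]; [exact H|exfalso].
  destruct (Hl (- g x)) as [M HM]; [lra|].
  set (z := Rmax M x + 1).
  assert (Hz : M < z /\ x < z) by (unfold z; split; [pose proof (Rmax_l M x)|pose proof (Rmax_r M x)]; lra).
  destruct (MVT_cor2 g g' x z) as [c [Hc1 Hc2]]; [lra| intros; apply Hd|].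
  assert (g' c <= 0) by (apply Hp; lra).
  specialize (HM z (proj1 Hz)).
  assert (g z <= g x) by nra.
  pose proof (Rle_abs (- g z)). rewrite Rabs_Ropp in H2. lra.
Qed.

Lemma ln_le_inv x y : 0 < x -> 0 < y -> ln x <= ln y -> x <= y.
Proof.
  intros Hx Hy H. destruct (Rle_or_lt x y) as [|Hlt]; [assumption|].
  pose proof (ln_increasing y x Hy Hlt). lra.
Qed.

Lemma lc_incr (f : R -> R) : full_support f -> log_concave f ->
  forall z x d, z <= x -> 0 < d -> f z * f (x + d) <= f x * f (z + d).
Proof.
  intros Hs Hlc z x d Hzx Hd.
  set (D := x + d - z).
  assert (HD : 0 < D) by (unfold D; lra).
  set (l := d / D).
  assert (Hl : 0 <= l <= 1).
  { unfold l; split. apply Rlt_le, Rdiv_lt_0_compat; lra.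
    apply Rmult_le_reg_r with D; [lra|]. unfold Rdiv. rewrite Rmult_assoc, Rinv_l by (apply Rgt_not_eq; lra). unfold D; lra. }
  pose proof (Hlc z (x + d) l Hl) as H1.
  pose proof (Hlc (x + d) z l Hl) as H2.
  replace (l * z + (1 - l) * (x + d)) with x in H1 by (unfold l, D; field; apply Rgt_not_eq; lra).
  replace (l * (x + d) + (1 - l) * z) with (z + d) in H2 by (unfold l, D; field; apply Rgt_not_eq; lra).
  apply ln_le_inv.
  - apply Rmult_lt_0_compat; apply Hs.
  - apply Rmult_lt_0_compat; apply Hs.
  - rewrite !ln_mult by apply Hs. lra.
Qed.
Lemma DF (F f : R -> R) : (forall x, is_derive F x (f x)) -> forall y, Derive (fun x => F x) y = f y.
Proof. intros HF y. apply is_derive_unique. apply HF. Qed.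
Ltac fin_derive HF := apply is_derive_Reals; auto_derive;
  [ repeat split; eexists; apply HF
  | rewrite ?(DF _ _ HF); unfold Rminus; ring ].

Section S.
Variables F f : R -> R.
Hypothesis HF : is_C1_cdf_with_density F f.
Hypothesis Hs : full_support f.
Hypothesis Hlc : log_concave f.

Lemma HD : forall x, is_derive F x (f x).
Proof. apply HF. Qed.

Lemma F_pos : forall x, 0 < F x.
Proof.
  intro x.
  assert (H0 : 0 <= F (x - 1)).
  { apply (mono_left F f). intro z; apply is_derive_Reals, HD.
    intros; apply Rlt_le, Hs. apply lim_m, HF. }
  destruct (MVT_cor2 F f (x - 1) x) as [c [Hc _]]; [lra| intros; apply is_derive_Reals, HD|].
  pose proof (Hs c). nra.
Qed.

Lemma F_lt1 : forall x, F x < 1.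
Proof.
  intro x.
  assert (H0 : 0 <= (fun z => 1 - F z) (x + 1)).
  { apply (mono_right (fun z => 1 - F z) (fun z => - f z)). intro z; fin_derive HD.
    intros; pose proof (Hs z); lra. apply lim_p, HF. }
  simpl in H0.
  destruct (MVT_cor2 F f x (x + 1)) as [c [Hc _]]; [lra| intros; apply is_derive_Reals, HD|].
  pose proof (Hs c). nra.
Qed.

Lemma L1 : forall x y, x < y -> F x * f y <= F y * f x.
Proof.
  intros x y Hxy. set (d := y - x).
  set (g := fun z => f x * F (z + d) - f y * F z).
  assert (H : 0 <= g x).
  { apply (mono_left g (fun z => f x * f (z + d) - f y * f z)).
    - intro z; unfold g; fin_derive HD.
    - intros z Hz. pose proof (lc_incr f Hs Hlc z x d Hz ltac:(unfold d; lra)).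
      replace (x + d) with y in H by (unfold d; ring). lra.
    - intros eps He.
      destruct (lim_m F (proj1 (proj2 (proj2 HF))) (eps / (f x + f y))) as [M HM].
      { apply Rdiv_lt_0_compat; [lra|]. pose proof (Hs x); pose proof (Hs y); lra. }
      exists (M - d). intros z Hz. unfold g.
      assert (Hd : 0 < d) by (unfold d; lra).
      pose proof (HM z ltac:(lra)). pose proof (HM (z + d) ltac:(lra)).
      pose proof (Hs x); pose proof (Hs y).
      assert (Heq : eps = f x * (eps / (f x + f y)) + f y * (eps / (f x + f y))) by (field; lra).
      rewrite Heq.
      eapply Rle_lt_trans. apply Rabs_triang.
      rewrite Rabs_Ropp, !Rabs_mult, (Rabs_right (f x)), (Rabs_right (f y)) by lra.
      apply Rplus_lt_compat; apply Rmult_lt_compat_l; lra. }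
  unfold g in H. replace (x + d) with y in H by (unfold d; ring). lra.
Qed.


Lemma L2 : forall x y, x < y -> (1 - F y) * f x <= (1 - F x) * f y.
Proof.
  intros x y Hxy. set (d := y - x).
  set (g := fun z => f y * (1 - F (z - d)) - f x * (1 - F z)).
  assert (H : 0 <= g y).
  { apply (mono_right g (fun z => - (f y * f (z - d)) + f x * f z)).
    - intro z; unfold g, d; fin_derive HD.
    - intros z Hz. pose proof (lc_incr f Hs Hlc x (z - d) d ltac:(unfold d; lra) ltac:(unfold d; lra)).
      replace (x + d) with y in H by (unfold d; ring).
      replace (z - d + d) with z in H by ring. lra.
    - intros eps He.
      destruct (lim_p F (proj2 (proj2 (proj2 HF))) (eps / (f x + f y))) as [M HM].
      { apply Rdiv_lt_0_compat; [lra|]. pose proof (Hs x); pose proof (Hs y); lra. }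
      exists (M + d). intros z Hz. unfold g.
      assert (Hd : 0 < d) by (unfold d; lra).
      pose proof (HM z ltac:(lra)). pose proof (HM (z - d) ltac:(lra)).
      pose proof (Hs x); pose proof (Hs y).
      assert (Heq : eps = f y * (eps / (f x + f y)) + f x * (eps / (f x + f y))) by (field; lra).
      rewrite Heq.
      eapply Rle_lt_trans. apply Rabs_triang.
      rewrite Rabs_Ropp, !Rabs_mult, (Rabs_right (f x)), (Rabs_right (f y)) by lra.
      apply Rplus_lt_compat; apply Rmult_lt_compat_l; lra. }
  unfold g in H. replace (y - d) with x in H by (unfold d; ring). lra.
Qed.

Lemma f_cont : forall x, continuity_pt f x.
Proof. intro x. apply continuity_pt_filterlim. apply HF. Qed.

Lemma F_cont : forall x, continuity_pt F x.
Proof. intro x. apply derivable_continuous_pt. exists (f x). apply is_derive_Reals, HD. Qed.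

Lemma root1 (t : R) : exists s0, forall s,
  (s < s0 -> 0 < (1 - F s) - (s - t) * f s) /\ (s0 < s -> (1 - F s) - (s - t) * f s < 0).
Proof.
  set (h := (fct_cte 1 - F - (id - fct_cte t) * f)%F).
  assert (Hc : continuity h).
  { intro x. unfold h. apply continuity_pt_minus. apply continuity_pt_minus.
    apply continuity_pt_const; intros a b; reflexivity. apply F_cont.
    apply continuity_pt_mult. apply continuity_pt_minus. apply derivable_continuous_pt, derivable_pt_id.
    apply continuity_pt_const; intros a b; reflexivity. apply f_cont. }
  assert (Hh : forall s, h s = (1 - F s) - (s - t) * f s) by (intro s; reflexivity).
  set (q := (1 - F t) / f t).
  assert (Hq : q * f t = 1 - F t) by (unfold q; field; apply Rgt_not_eq, Hs).
  pose proof (F_lt1 t) as Ht1. pose proof (Hs t) as Hft.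
  assert (Hq0 : 0 < q) by nra.
  set (b := t + q + 1).
  assert (Hb : h b < 0).
  { rewrite Hh. pose proof (L2 t b ltac:(unfold b; lra)). pose proof (Hs b).
    assert (((1 - F b) - (b - t) * f b) * f t < 0).
    { replace (b - t) with (q + 1) by (unfold b; ring). nra. }
    nra. }
  destruct (IVT_cor h t b Hc ltac:(unfold b; lra)) as [s0 [Hs0 Hz]].
  { rewrite (Hh t). nra. }
  rewrite Hh in Hz. exists s0. intro s. split; intro Hss.
  - pose proof (L2 s s0 Hss). pose proof (Hs s). pose proof (Hs s0).
    assert (1 - F s0 = (s0 - t) * f s0) by lra.
    assert ((s0 - t) * f s <= 1 - F s) by nra. nra.
  - pose proof (L2 s0 s Hss). pose proof (Hs s). pose proof (Hs s0).
    assert (1 - F s0 = (s0 - t) * f s0) by lra.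
    assert (1 - F s <= (s0 - t) * f s) by nra. nra.
Qed.

Lemma root0 (t : R) : exists s0, forall s,
  (s < s0 -> F s + (s - t) * f s < 0) /\ (s0 < s -> 0 < F s + (s - t) * f s).
Proof.
  set (h := (F + (id - fct_cte t) * f)%F).
  assert (Hc : continuity h).
  { intro x. unfold h. apply continuity_pt_plus. apply F_cont.
    apply continuity_pt_mult. apply continuity_pt_minus. apply derivable_continuous_pt, derivable_pt_id.
    apply continuity_pt_const; intros a b; reflexivity. apply f_cont. }
  assert (Hh : forall s, h s = F s + (s - t) * f s) by (intro s; reflexivity).
  set (q := F t / f t).
  assert (Hq : q * f t = F t) by (unfold q; field; apply Rgt_not_eq, Hs).
  pose proof (F_pos t) as Ht1. pose proof (Hs t) as Hft.
  assert (Hq0 : 0 < q) by nra.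
  set (a := t - q - 1).
  assert (Ha : h a < 0).
  { rewrite Hh. pose proof (L1 a t ltac:(unfold a; lra)). pose proof (Hs a).
    assert ((F a + (a - t) * f a) * f t < 0).
    { replace (a - t) with (- (q + 1)) by (unfold a; ring). nra. }
    nra. }
  destruct (IVT_cor h a t Hc ltac:(unfold a; lra)) as [s0 [Hs0 Hz]].
  { rewrite (Hh t). nra. }
  rewrite Hh in Hz. exists s0. intro s. split; intro Hss.
  - pose proof (L1 s s0 Hss). pose proof (Hs s). pose proof (Hs s0).
    assert (F s0 = (t - s0) * f s0) by lra.
    assert (F s <= (t - s0) * f s) by nra. nra.
  - pose proof (L1 s0 s Hss). pose proof (Hs s). pose proof (Hs s0).
    assert (F s0 = (t - s0) * f s0) by lra.
    assert ((t - s0) * f s <= F s) by nra. nra.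
Qed.

End S.

Lemma QC (G G' : R -> R) (s0 : R) :
  (forall s, derivable_pt_lim G s (G' s)) ->
  (forall s, s < s0 -> 0 < G' s) -> (forall s, s0 < s -> G' s < 0) ->
  strictly_quasiconcave G /\ (forall s, G s <= G s0).
Proof.
  intros Hd Hinc Hdec.
  assert (Inc : forall x y, x < y -> y <= s0 -> G x < G y).
  { intros x y Hxy Hy. destruct (MVT_cor2 G G' x y) as [c [Hc1 Hc2]]; [lra|intros; apply Hd|].
    assert (0 < G' c) by (apply Hinc; lra). nra. }
  assert (Dec : forall x y, x < y -> s0 <= x -> G y < G x).
  { intros x y Hxy Hy. destruct (MVT_cor2 G G' x y) as [c [Hc1 Hc2]]; [lra|intros; apply Hd|].
    assert (G' c < 0) by (apply Hdec; lra). nra. }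
  assert (Main : forall x y l, x < y -> 0 < l < 1 -> Rmin (G x) (G y) < G (l * x + (1 - l) * y)).
  { intros x y l Hxy Hl. set (m := l * x + (1 - l) * y).
    assert (x < m < y) by (unfold m; nra).
    destruct (Rle_or_lt m s0).
    - pose proof (Inc x m ltac:(lra) H0). pose proof (Rmin_l (G x) (G y)). lra.
    - pose proof (Dec m y ltac:(lra) ltac:(lra)). pose proof (Rmin_r (G x) (G y)). lra. }
  split.
  - intros x y l Hxy Hl. destruct (Rlt_or_le x y) as [H|H].
    + apply Main; assumption.
    + assert (y < x) by (destruct H; [assumption| congruence]).
      rewrite Rmin_comm. replace (l * x + (1 - l) * y) with ((1 - l) * y + (1 - (1 - l)) * x) by ring.
      apply Main; lra.
  - intro s. destruct (Rtotal_order s s0) as [H|[H|H]].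
    + left; apply Inc; lra.
    + subst; lra.
    + left; apply Dec; lra.
Qed.

Lemma compose (G : R -> R) (a s0 : R) : a <> 0 ->
  strictly_quasiconcave G -> (forall s, G s <= G s0) ->
  strictly_quasiconcave (fun r => G (r * a)) /\ attains_max (fun r => G (r * a)).
Proof.
  intros Ha Hq Hm. split.
  - intros x y l Hxy Hl. simpl.
    replace ((l * x + (1 - l) * y) * a) with (l * (x * a) + (1 - l) * (y * a)) by ring.
    apply Hq; [|assumption]. intro E. apply Hxy. apply Rmult_eq_reg_r with a; assumption.
  - exists (s0 / a). intro r'. simpl. replace (s0 / a * a) with s0 by (field; assumption). apply Hm.
Qed.

Theorem proposition5 (F f : R -> R)
  (HF : is_C1_cdf_with_density F f)
  (Hsupp : full_support f)
  (Hlc : log_concave f)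
  (d1 d0 phi t : R)
  (Hd1 : 0 <= d1 <= 1) (Hd0 : 0 <= d0 <= 1)
  (Hphi : / 2 < phi <= 1)
  (Ht : 0 <= t) :
  (~ is_null d1 d0 phi ->
     forall (gamma : R) (beta : bool),
       strictly_quasiconcave (Vbeta F (rho d1 d0 phi) t gamma beta) /\
       attains_max (Vbeta F (rho d1 d0 phi) t gamma beta)) /\
  (is_null d1 d0 phi ->
     forall gamma r r' : R,
       payoff F (rho d1 d0 phi) t gamma r = payoff F (rho d1 d0 phi) t gamma r').
Proof.
  split.
  - intros Hn gamma beta. unfold is_null in Hn. set (a := rho d1 d0 phi) in *.
    pose proof (HD F f HF) as HDF.
    destruct beta; simpl.
    + destruct (root1 F f HF Hsupp Hlc t) as [s0 Hs0].
      set (G := fun s => - gamma + s * (1 - F s) + t * F s).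
      assert (Hq : strictly_quasiconcave G /\ (forall s, G s <= G s0)).
      { apply (QC G (fun s => (1 - F s) - (s - t) * f s)).
        - intro s; unfold G; fin_derive HDF.
        - intros s H; apply (Hs0 s), H.
        - intros s H; apply (Hs0 s), H. }
      destruct Hq as [Hq Hm].
      exact (compose G a s0 Hn Hq Hm).
    + destruct (root0 F f HF Hsupp Hlc t) as [s0 Hs0].
      set (G := fun s => - (s * F s) + t * F s).
      assert (Hq : strictly_quasiconcave G /\ (forall s, G s <= G s0)).
      { apply (QC G (fun s => - (F s + (s - t) * f s))).
        - intro s; unfold G; fin_derive HDF.
        - intros s H; pose proof (proj1 (Hs0 s) H); lra.
        - intros s H; pose proof (proj2 (Hs0 s) H); lra. }
      destruct Hq as [Hq Hm].
      exact (compose G a s0 Hn Hq Hm).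
  - intros Hn gamma r r'. unfold is_null in Hn. unfold payoff, V1, V0.
    rewrite Hn, !Rmult_0_r.
    destruct (Rle_dec gamma 0); reflexivity.
Qed.
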